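(* Let $a\in[-1,1)$. Let $M_2=\big(\int_{-1}^1t^{i+j}\,dt\big)_{0\le i,j\le2}$ and $v_a^{(2)}=\big(1-a,\ \tfrac{1-a^2}{2},\ \tfrac{1-a^3}{3}\big)^\top$. Then the linear equation $M_2x=v_a^{(2)}$ has a solution $x\in(0,\infty)^3$ if and only if $0<a<\frac{\sqrt{105}-5}{10}$. *)

(* Defs.v *)
From Stdlib Require Import Reals.
From Coquelicot Require Import Coquelicot.
Open Scope R_scope.

Definition M2 (i j : nat) : R := RInt (fun t => t ^ (i + j)) (-1) 1.

Definition v2 (a : R) (i : nat) : R := (1 - a ^ (S i)) / INR (S i).

(* Main.v *)
Require Import Defs.
From Stdlib Require Import Reals Lra Lia.
From Coquelicot Require Import Coquelicot.
Open Scope R_scope.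

Lemma M2_val (i j : nat) : M2 i j = (1 - (-1) ^ (S (i + j))) / INR (S (i + j)).
Proof.
  unfold M2. set (k := (i + j)%nat).
  apply is_RInt_unique.
  assert (Hk : INR (S k) <> 0) by (apply not_0_INR; lia).
  replace ((1 - (-1) ^ S k) / INR (S k)) with
    ((fun t => t ^ S k / INR (S k)) 1 - (fun t => t ^ S k / INR (S k)) (-1))
    by (simpl; rewrite pow1; field; auto).
  apply (is_RInt_derive (fun t => t ^ S k / INR (S k)) (fun t => t ^ k)).
  - intros x _. auto_derive; auto. simpl. field. auto.
  - intros x _. apply continuity_pt_filterlim. apply derivable_continuous_pt. apply derivable_pt_pow.
Qed.

Theorem lemma4p1 (a : R) (ha : -1 <= a < 1) :
  (exists x : nat -> R,
      0 < x 0%nat /\ 0 < x 1%nat /\ 0 < x 2%nat /\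
      forall i : nat, (i <= 2)%nat ->
        sum_f_R0 (fun j => M2 i j * x j) 2 = v2 a i)
  <-> (0 < a /\ a < (sqrt 105 - 5) / 10).
Proof.
  assert (Hs : sqrt 105 * sqrt 105 = 105) by (apply sqrt_sqrt; lra).
  assert (Hs0 : 0 <= sqrt 105) by apply sqrt_pos.
  split.
  - intros [x [H0 [H1 [H2 H]]]].
    pose proof (H 0%nat ltac:(lia)) as E0.
    pose proof (H 1%nat ltac:(lia)) as E1.
    pose proof (H 2%nat ltac:(lia)) as E2.
    simpl in E0, E1, E2. rewrite !M2_val in E0, E1, E2.
    unfold v2 in E0, E1, E2. simpl in E0, E1, E2.
    assert (X2 : x 2%nat = 15 * a * (1 - a*a) / 8) by (field_simplify in E0; field_simplify in E2; nra).
    assert (X0 : x 0%nat = (1 - a) * (4 - 5*a - 5*a*a) / 8) by (field_simplify in E0; field_simplify in E2; nra).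
    assert (Ha : 0 < a) by nra.
    split; [exact Ha|].
    assert (Q : 4 - 5*a - 5*a*a > 0) by nra.
    destruct (Rlt_or_le a ((sqrt 105 - 5) / 10)) as [h|h]; [exact h|]. nra.
  - intros [Ha Hb].
    exists (fun n => match n with 0%nat => (1 - a) * (4 - 5*a - 5*a*a) / 8
                            | 1%nat => 3 * (1 - a*a) / 4
                            | _ => 15 * a * (1 - a*a) / 8 end).
    assert (Q : 4 - 5*a - 5*a*a > 0) by nra.
    split; [nra|]. split; [nra|]. split; [nra|].
    intros i Hi.
    destruct i as [|[|[|i]]]; try lia; simpl; rewrite !M2_val; unfold v2; simpl; field.
Qed.
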